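(* Let $(r_k)_{k\in\mathbb N}$ be non-negative real numbers and let $A\in(0,1/2)$ and $B,C,D\ge0$ be constants such that for all $k$, \[r_{k+1}^2\le\Big(\big((1-A)r_k^2+B\big)^{1/2}+C\Big)^2+D.\] Then for all $k$, \[r_k\le\sqrt2\Big(1-\frac A2\Big)^k(r_0+\sqrt B)+\frac{2\sqrt2C}{A}+2\sqrt{\frac{D+B}{A}}.\] *)

(* Defs.v *)
From Stdlib Require Export Reals.

(* Main.v *)
Require Import Defs.
From Stdlib Require Import Reals.
From Stdlib Require Import Lra Psatz.
Open Scope R_scope.

Lemma div_nonneg (a b : R) : 0 <= a -> 0 < b -> 0 <= a / b.
Proof. intros. unfold Rdiv. apply Rmult_le_pos; [lra|]. left; apply Rinv_0_lt_compat; lra. Qed.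

Theorem lemma11 (r : nat -> R) (A B C D : R)
  (hr : forall k, 0 <= r k)
  (hA0 : 0 < A) (hA1 : A < 1 / 2)
  (hB : 0 <= B) (hC : 0 <= C) (hD : 0 <= D)
  (hrec : forall k,
     (r (S k)) ^ 2 <= (sqrt ((1 - A) * (r k) ^ 2 + B) + C) ^ 2 + D) :
  forall k,
    r k <= sqrt 2 * (1 - A / 2) ^ k * (r 0%nat + sqrt B)
           + 2 * sqrt 2 * C / A + 2 * sqrt ((D + B) / A).
Proof.
  set (s := sqrt ((D + B) / A)).
  set (qq := 1 - A / 2).
  set (P := r 0%nat + sqrt B).
  assert (hs0 : 0 <= s) by apply sqrt_pos.
  assert (hs2 : s * s = (D + B) / A) by (apply sqrt_sqrt; apply div_nonneg; lra).
  assert (hE : D + B = A * (s * s)) by (rewrite hs2; field; lra).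
  assert (h2 : 1 <= sqrt 2).
  { rewrite <- sqrt_1. apply sqrt_le_1_alt. lra. }
  assert (hsB : 0 <= sqrt B) by apply sqrt_pos.
  assert (hP : 0 <= P) by (unfold P; pose proof (hr 0%nat); lra).
  assert (hCA : 0 <= 2 * sqrt 2 * C / A).
  { apply div_nonneg; [|lra]. apply Rmult_le_pos; [|lra]. lra. }
  induction k as [|k IH].
  - simpl. pose proof (hr 0%nat). unfold P. nra.
  - set (M := sqrt 2 * qq ^ k * P + 2 * sqrt 2 * C / A + 2 * s).
    fold M in IH.
    assert (hqk : 0 <= qq ^ k) by (apply pow_le; unfold qq; lra).
    assert (hMs : 2 * s <= M).
    { unfold M. assert (0 <= sqrt 2 * qq ^ k * P) by (apply Rmult_le_pos; [apply Rmult_le_pos|]; lra). lra. }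
    assert (hM1 : sqrt 2 * qq ^ S k * P + 2 * sqrt 2 * C / A + 2 * s
                  = qq * M + sqrt 2 * C + A * s).
    { unfold M, qq. simpl. field. lra. }
    rewrite hM1.
    set (x := sqrt ((1 - A) * M ^ 2 + B)).
    set (y := qq * M + A * s).
    assert (hx0 : 0 <= x) by apply sqrt_pos.
    assert (hx2 : x * x = (1 - A) * M ^ 2 + B).
    { apply sqrt_sqrt. pose proof (pow2_ge_0 M). nra. }
    assert (hy0 : 0 <= y) by (unfold y, qq; nra).
    assert (hxy2 : x * x + D <= y * y).
    { rewrite hx2. unfold y, qq.
      assert (h1 : 0 <= (M - 2 * s) * ((1 - A/2) * A * s)).
      { apply Rmult_le_pos; [lra|]. apply Rmult_le_pos; [|lra]. nra. }
      assert (h3 : 0 <= (1 - A/2) * A * s * s) by (apply Rmult_le_pos; [|lra]; apply Rmult_le_pos; nra).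
      assert (D + B <= 2 * (1 - A/2) * M * A * s + A * A * s * s + A*A*M*M/4).
      { rewrite hE. assert (0 <= A*A*s*s) by (apply Rmult_le_pos; nra). assert (0 <= A*A*M*M) by (apply Rmult_le_pos; nra). nra. }
      simpl. nra. }
    assert (hxy : x <= y) by nra.
    assert (hmono : sqrt ((1 - A) * r k ^ 2 + B) <= x).
    { apply sqrt_le_1_alt. pose proof (hr k). assert (r k ^2 <= M ^ 2) by (simpl; nra). nra. }
    pose proof (hrec k) as Hk.
    pose proof (sqrt_pos ((1 - A) * r k ^ 2 + B)).
    assert (Hk2 : r (S k) ^ 2 <= (y + sqrt 2 * C) ^ 2).
    { eapply Rle_trans; [exact Hk|].
      set (a := sqrt ((1 - A) * r k ^ 2 + B)) in *.
      assert (e1 : (a + C) ^ 2 <= (x + C) ^ 2).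
      { simpl. assert (0 <= a + C) by lra. assert (a + C <= x + C) by lra. nra. }
      assert (e2 : x * C <= y * (sqrt 2 * C)).
      { apply Rmult_le_compat; try lra. nra. }
      assert (e3 : C * C <= (sqrt 2 * C) * (sqrt 2 * C)).
      { assert (sqrt 2 * sqrt 2 = 2) by (apply sqrt_sqrt; lra).
        replace ((sqrt 2 * C) * (sqrt 2 * C)) with ((sqrt 2 * sqrt 2) * (C * C)) by ring.
        nra. }
      simpl in *. nra. }
    pose proof (hr (S k)).
    assert (0 <= y + sqrt 2 * C) by nra.
    apply Rsqr_incr_0_var; [unfold Rsqr; simpl in Hk2; rewrite !Rmult_1_r in Hk2; unfold y in Hk2; replace (qq * M + sqrt 2 * C + A * s) with (qq * M + A * s + sqrt 2 * C) by ring; exact Hk2|unfold y in *; lra].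
Qed.
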